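(* Let $f:\mathbb{R}\to\mathbb{R}$ be continuous, and let $(x_n)_{n\in\mathbb{N}}\subseteq\mathcal{E}$ and $x\in\mathcal{E}$ with $x_n\to x$ in unbounded order (uo). Then $f\circ x_n\to f\circ x$ in unbounded order in $\mathcal{E}^u$.
   Context: Let $\mathcal{E}$ be an order complete vector lattice with a weak order unit $E$, $K$ its Stone space (extremally disconnected compact Hausdorff), and $C^\infty(K)$ the vector lattice of continuous functions $K\to[-\infty,\infty]$ finite off a nowhere dense set (identified when equal off a nowhere dense set), which is the universal completion $\mathcal{E}^u$. Fix a Maeda–Ogasawara representation of $\mathcal{E}$ as an order dense ideal of $C^\infty(K)$ with $E$ corresponding to $\mathbf{1}$. For continuous $f:\mathbb{R}\to\mathbb{R}$ and $X\in C^\infty(K)$, $f\circ X$ denotes the unique element of $C^\infty(K)$ agreeing with $\omega\mapsto f(X(\omega))$ on the open dense set where $X$ is finite (by the paper's main theorem, this coincides with the Daniell functional calculus $f(X)$). A sequence $(y_n)$ in a vector lattice $F$ converges in unbounded order (uo) to $y$ if $|y_n-y|\wedge u\to0$ in order for every $u\in F_+$. *)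

(* Defs.v *)
From HB Require Import structures.
From mathcomp Require Import all_boot all_order all_algebra.
From mathcomp Require Import all_classical all_reals all_analysis.
From Stdlib Require Import ClassicalEpsilon.
Set Implicit Arguments. Unset Strict Implicit. Unset Printing Implicit Defensive.
Import Order.TTheory GRing.Theory Num.Theory.
Import numFieldNormedType.Exports.
Local Open Scope classical_set_scope.
Local Open Scope ring_scope.

Definition extremally_disconnected (K : topologicalType) : Prop :=
  forall U : set K, open U -> open (closure U).

Definition nowhere_dense (K : topologicalType) (A : set K) : Prop :=
  (closure A)° = set0.

Section Cinfty.
Context (R : realType) (K : topologicalType).

(* C^oo(K): continuous functions K -> [-oo,+oo] that are finite off a nowhere
   dense set.  On an extremally disconnected compact Hausdorff K, each class
   "modulo equality off a nowhere dense set" contains exactly one continuous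
   representative, so we identify C^oo(K) with this set of functions. *)
Definition Cinf : set (K -> \bar R) :=
  [set X | continuous X /\
           nowhere_dense [set w | X w = +oo%E \/ X w = -oo%E]].

Definition cinf_choose (P : set (K -> \bar R)) : K -> \bar R :=
  epsilon (inhabits (fun _ => 0%E)) P.

(* vector operations of C^oo(K): defined on the (dense) set where the
   operands are finite, and extended (uniquely) to an element of C^oo(K) *)
Definition cinf_add (X Y : K -> \bar R) : K -> \bar R :=
  cinf_choose [set Z | Cinf Z /\ forall w, X w \is a fin_num ->
                 Y w \is a fin_num -> Z w = (X w + Y w)%E].

Definition cinf_sub (X Y : K -> \bar R) : K -> \bar R :=
  cinf_choose [set Z | Cinf Z /\ forall w, X w \is a fin_num ->
                 Y w \is a fin_num -> Z w = (X w - Y w)%E].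

Definition cinf_scale (c : R) (X : K -> \bar R) : K -> \bar R :=
  fun w => (c%:E * X w)%E.

Definition cinf_comp (f : R -> R) (X : K -> \bar R) : K -> \bar R :=
  cinf_choose [set Z | Cinf Z /\ forall w, X w \is a fin_num ->
                 Z w = (f (fine (X w)))%:E].

Definition order_dense_ideal (E : set (K -> \bar R)) : Prop :=
  E `<=` Cinf /\
      E (fun _ => 0%E) /\
      (forall X Y, E X -> E Y -> E (cinf_add X Y)) /\
      (forall c X, E X -> E (cinf_scale c X)) /\
      (forall X Y, Cinf Y -> E X -> (forall w, (`|Y w| <= `|X w|)%E) -> E Y) /\
      (forall Y, Cinf Y -> (forall w, (0 <= Y w)%E) -> (exists w, Y w != 0%E) ->
         exists2 X, E X & [/\ forall w, (0 <= X w)%E, forall w, (X w <= Y w)%E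
                             & exists w, X w != 0%E]).

(* order convergence to 0 in the vector lattice F (a sublattice of C^oo(K),
   pointwise order): |s n| is eventually dominated by a decreasing net y in F
   with inf_F y = 0 *)
Definition order_null (F : set (K -> \bar R)) (s : nat -> K -> \bar R) : Prop :=
  exists (D : Type) (leD : D -> D -> Prop) (y : D -> K -> \bar R),
    inhabited D /\
    (forall a, leD a a) /\
    (forall a b c, leD a b -> leD b c -> leD a c) /\
    (forall a b, exists c, leD a c /\ leD b c) /\
    (forall a, F (y a)) /\
    (forall a b, leD a b -> forall w, (y b w <= y a w)%E) /\
    (forall a w, (0 <= y a w)%E) /\
    (forall h, F h -> (forall a w, (h w <= y a w)%E) -> forall w, (h w <= 0)%E) /\
    (forall a, exists n0, forall n, (n0 <= n)%N -> forall w, (`|s n w| <= y a w)%E).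

Definition uo_conv (F : set (K -> \bar R)) (a : nat -> K -> \bar R)
    (b : K -> \bar R) : Prop :=
  forall u, F u -> (forall w, (0 <= u w)%E) ->
    order_null F (fun n w => Order.min `|cinf_sub (a n) b w|%E (u w)).

End Cinfty.

(* Main.v *)
Require Import Defs.
From HB Require Import structures.
From mathcomp Require Import all_boot all_order all_algebra.
From mathcomp Require Import all_classical all_reals all_analysis.
From Stdlib Require Import ClassicalEpsilon.
From mathcomp Require Import lra.
Import Order.TTheory GRing.Theory Num.Theory.
Import numFieldNormedType.Exports.
Local Open Scope classical_set_scope.
Local Open Scope ring_scope.
Set Implicit Arguments. Unset Strict Implicit. Unset Printing Implicit Defensive.

Section Helpers.
Context (R : realType) (K : topologicalType).
Implicit Types (X Y Z : K -> \bar R).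

Lemma cont_nbhs X w (U : set (\bar R)) : {for w, continuous X} ->
  open U -> U (X w) -> nbhs w (X @^-1` U).
Proof. by move=> cX oU Uw; apply: cX; apply: open_nbhs_nbhs. Qed.

Lemma cont_gt X w (a : \bar R) : {for w, continuous X} -> (a < X w)%E ->
  nbhs w [set v | (a < X v)%E].
Proof. by move=> cX aw; exact: (cont_nbhs cX (@open_ereal_gt_ereal R a) aw). Qed.

Lemma cont_lt X w (a : \bar R) : {for w, continuous X} -> (X w < a)%E ->
  nbhs w [set v | (X v < a)%E].
Proof. by move=> cX aw; exact: (cont_nbhs cX (@open_ereal_lt_ereal R a) aw). Qed.

Lemma nbhs_open_sub w (A : set K) : nbhs w A ->
  exists B, [/\ open B, B w & B `<=` A].
Proof. by rewrite nbhsE => -[B [oB Bw] BA]; exists B. Qed.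

Lemma open_nonempty_fin X (W : set K) : nowhere_dense [set w | X w = +oo%E \/ X w = -oo%E] ->
  open W -> W !=set0 -> exists2 w, W w & X w \is a fin_num.
Proof.
move=> nd oW [w0 Ww0]; apply: contrapT => H.
have sub : W `<=` [set w | X w = +oo%E \/ X w = -oo%E].
  move=> v Wv; case E: (X v) => [r| |]; [|by left|by right].
  by exfalso; apply: H; exists v => //; rewrite E.
have : W `<=` (closure [set w | X w = +oo%E \/ X w = -oo%E])°.
  rewrite -open_subsetE //; apply: subset_trans sub _; exact: subset_closure.
by move=> /(_ _ Ww0); rewrite nd.
Qed.

Lemma fin_near X w : {for w, continuous X} -> X w \is a fin_num ->
  \forall v \near w, X v \is a fin_num.
Proof.
move=> cX; case E: (X w) => [r| |] // _.
have h : X @ nbhs w --> r%:E by rewrite -E; exact: cX.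
exact: (cvg_is_fine h).
Qed.


Lemma ereal_between (a b : \bar R) : (a < b)%E -> exists c, (a < c < b)%E.
Proof.
case: a => [r| |]; case: b => [s| |] //= h.
- exists (((r + s) / 2)%R)%:E; rewrite !lte_fin; move: h; rewrite lte_fin => h.
  by have [-> ->] := midf_lt h.
- by exists ((r + 1)%R)%:E; rewrite !lte_fin ltrDl ltr01 ltey.
- by exists ((s - 1)%R)%:E; rewrite !lte_fin gtrDl ltrN10 ltNyr.
- by exists 0%E; rewrite ltNy0 lt0y.
Qed.

Lemma ereal_cont_of_rays (Z : K -> \bar R) w :
  (forall a, (a < Z w)%E -> \forall v \near w, (a < Z v)%E) ->
  (forall b, (Z w < b)%E -> \forall v \near w, (Z v < b)%E) ->
  {for w, continuous Z}.
Proof.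
move=> hg hl U /=; rewrite itv_nbhsE => -[i [oi wi] iU].
apply: (@filterS _ _ _ (fun v => Z v \in i)); first by move=> v /= h; exact: iU.
clear iU.
move: oi wi; case: i => [[[] a|[]] [[] b|[]]] //= _; rewrite ?in_itv /= ?andbT.
- move=> /andP[aw wb]; near=> v; rewrite in_itv /=; apply/andP; split; near: v; [exact: hg|exact: hl].
- by move=> aw; apply: filterS (hg a aw) => v; rewrite in_itv /= andbT.
- by move=> wb; apply: filterS (hl b wb) => v; rewrite in_itv /=.
- by move=> _; apply: nearW => v; rewrite in_itv.
Unshelve. all: by end_near.
Qed.


Lemma ed_extend (G : set K) (phi : K -> \bar R) :
  extremally_disconnected K -> open G ->
  (forall W : set K, open W -> W !=set0 -> (W `&` G) !=set0) ->
  (forall w, G w -> {for w, continuous phi}) ->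
  exists Z : K -> \bar R, continuous Z /\ forall w, G w -> Z w = phi w.
Proof.
move=> ED oG dG cphi.
pose S (N : set K) := phi @` (N `&` G).
pose up (w : K) := ereal_inf [set ereal_sup (S N) | N in nbhs w].
pose lo (w : K) := ereal_sup [set ereal_inf (S N) | N in nbhs w].
have meet (w : K) (N1 N2 : set K) : nbhs w N1 -> nbhs w N2 ->
    (ereal_inf (S N1) <= ereal_sup (S N2))%E.
  move=> h1 h2.
  have [B [oB Bw BN]] := nbhs_open_sub (filterI h1 h2).
  have [v [Bv Gv]] := dG B oB (ex_intro _ w Bw).
  have [N1v N2v] := BN v Bv.
  apply: (@le_trans _ _ (phi v)).
  - by apply: ereal_inf_lbound; exists v.
  - by apply: ereal_sup_ubound; exists v.
have lo_up (w : K) : (lo w <= up w)%E.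
  apply/ereal_supP => _ [N1 h1 <-]; apply/ereal_infP => _ [N2 h2 <-].
  exact: meet h1 h2.
have lo_phi (w : K) : G w -> (lo w <= phi w)%E.
  move=> Gw; apply/ereal_supP => _ [N hN <-]; apply: ereal_inf_lbound.
  by exists w => //; split => //; exact: nbhs_singleton hN.
have phi_up (w : K) : G w -> (phi w <= up w)%E.
  move=> Gw; apply/ereal_infP => _ [N hN <-]; apply: ereal_sup_ubound.
  by exists w => //; split => //; exact: nbhs_singleton hN.
have up_lo (w : K) : up w = lo w.
  apply/eqP; rewrite eq_le lo_up andbT leNgt; apply/negP => lt.
  have [c /andP[lc cu]] := ereal_between lt.
  pose P := G `&` [set v | (phi v < c)%E].
  pose Q := G `&` [set v | (c < phi v)%E].
  have oP : open P.
    rewrite openE => v [Gv pv]; apply: filterI.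
      exact: (open_nbhs_nbhs (conj oG Gv)).
    exact: cont_lt (cphi v Gv) pv.
  have oQ : open Q.
    rewrite openE => v [Gv pv]; apply: filterI.
      exact: (open_nbhs_nbhs (conj oG Gv)).
    exact: cont_gt (cphi v Gv) pv.
  have cP : closure P w.
    move=> B hB.
    have : (ereal_inf (S B) < c)%E.
      by apply: le_lt_trans lc; apply: ereal_sup_ubound; exists B.
    by move/ereal_inf_ltP => [_ [v [Bv Gv] <-] pv]; exists v.
  have cQ : closure Q w.
    move=> B hB.
    have : (c < ereal_sup (S B))%E.
      by apply: lt_le_trans cu _; apply: ereal_inf_lbound; exists B.
    by move/ereal_sup_gtP => [_ [v [Bv Gv] <-] pv]; exists v.
  have ocP : open (closure P) := ED P oP.
  have [q [Qq cPq]] := cQ _ (open_nbhs_nbhs (conj ocP cP)).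
  have [v [[_ Pv] [_ Qv]]] := cPq Q (open_nbhs_nbhs (conj oQ Qq)).
  by move: (lt_trans Pv Qv); rewrite ltxx.
exists up; split; last first.
  move=> w Gw; apply/eqP; rewrite eq_le phi_up // andbT.
  by rewrite up_lo lo_phi.
move=> w; apply: ereal_cont_of_rays.
- move=> a; rewrite up_lo => /ereal_sup_gtP [_ [N hN <-] aN].
  have [B [oB Bw BN]] := nbhs_open_sub hN.
  apply: filterS (open_nbhs_nbhs (conj oB Bw)) => v Bv.
  have sub : S B `<=` S N.
    by move=> _ [u [Bu Gu] <-]; exists u => //; split => //; exact: BN.
  rewrite up_lo; apply: (lt_le_trans aN); apply: (le_trans (ereal_inf_le_tmp sub)).
  by apply: ereal_sup_ubound; exists B => //; exact: (open_nbhs_nbhs (conj oB Bv)).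
- move=> b /ereal_inf_ltP [_ [N hN <-] Nb].
  have [B [oB Bw BN]] := nbhs_open_sub hN.
  apply: filterS (open_nbhs_nbhs (conj oB Bw)) => v Bv.
  apply: le_lt_trans Nb; apply: (@le_trans _ _ (ereal_sup (S B))).
    by apply: ereal_inf_lbound; exists B => //; exact: (open_nbhs_nbhs (conj oB Bv)).
  apply/ereal_supP => _ [u [Bu Gu] <-]; apply: ereal_sup_ubound.
  by exists u => //; split => //; exact: BN.
Qed.


Lemma dense1 X : Cinf X -> forall W : set K, open W -> W !=set0 ->
  (W `&` [set w | X w \is a fin_num]) !=set0.
Proof. by move=> [_ nd] W oW W0; have [w Ww Xw] := open_nonempty_fin nd oW W0; exists w. Qed.

Lemma open1 X : Cinf X -> open [set w | X w \is a fin_num].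
Proof. by move=> [cX _]; rewrite openE => w /= hw; exact: fin_near (cX w) hw. Qed.

Lemma dense2 X Y : Cinf X -> Cinf Y -> forall W : set K, open W -> W !=set0 ->
  (W `&` [set w | X w \is a fin_num /\ Y w \is a fin_num]) !=set0.
Proof.
move=> hX hY W oW W0; have [w1 [Ww1 Xw1]] := dense1 hX oW W0.
pose B := (W `&` [set w | X w \is a fin_num])°.
have oB : open B by exact: open_interior.
have Bw1 : B w1.
  by apply: filterI; [exact: (open_nbhs_nbhs (conj oW Ww1))|exact: (open_nbhs_nbhs (conj (open1 hX) Xw1))].
have [w [Bw Yw]] := dense1 hY oB (ex_intro _ w1 Bw1).
by have [Ww Xw] := interior_subset Bw; exists w.
Qed.

Lemma open2 X Y : Cinf X -> Cinf Y ->
  open [set w | X w \is a fin_num /\ Y w \is a fin_num].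
Proof.
move=> hX hY; rewrite openE => w /= [hx hy]; apply: filterI.
- exact: (open_nbhs_nbhs (conj (open1 hX) hx)).
- exact: (open_nbhs_nbhs (conj (open1 hY) hy)).
Qed.

Lemma Cinf_of Z (G : set K) : continuous Z -> open G ->
  (forall W : set K, open W -> W !=set0 -> (W `&` G) !=set0) ->
  (forall w, G w -> Z w \is a fin_num) -> Cinf Z.
Proof.
move=> cZ oG dG fZ; split => //; apply/seteqP; split => // v hv.
have [B [oB Bv Bsub]] := nbhs_open_sub hv.
have [u [Bu Gu]] := dG B oB (ex_intro _ v Bv).
have cl : closed (~` G) by exact: open_closedC.
have : (~` G) u.
  apply: cl; apply: (closureS _ (Bsub u Bu)) => t [Zt|Zt] Gt; by have := fZ t Gt; rewrite Zt.
by move/(_ Gu).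
Qed.


Lemma fine_cont X w : {for w, continuous X} -> X w \is a fin_num ->
  fine \o X @ nbhs w --> fine (X w).
Proof.
move=> cX hw; apply: fine_cvg; rewrite fineK //; exact: cX.
Qed.

Lemma cinf_sub_spec X Y : extremally_disconnected K -> Cinf X -> Cinf Y ->
  Cinf (cinf_sub X Y) /\ forall w, X w \is a fin_num -> Y w \is a fin_num ->
    cinf_sub X Y w = (X w - Y w)%E.
Proof.
move=> ED hX hY.
pose G := [set w | X w \is a fin_num /\ Y w \is a fin_num].
pose phi w := (fine (X w) - fine (Y w))%:E.
have cphi : forall w, G w -> {for w, continuous phi}.
  move=> w [hx hy]; change (phi @ nbhs w --> (fine (X w) - fine (Y w))%:E).
  apply: (@cvg_EFin R K (nbhs w) _ phi); first by apply: nearW => v.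
  exact: (cvgB (fine_cont (proj1 hX w) hx) (fine_cont (proj1 hY w) hy)).
have [Z [cZ eZ]] := ed_extend ED (open2 hX hY) (dense2 hX hY) cphi.
rewrite /cinf_sub /cinf_choose.
match goal with |- context [epsilon ?i ?P] => apply: (@epsilon_spec _ i P) end.
exists Z; split.
  apply: (Cinf_of cZ (open2 hX hY) (dense2 hX hY)) => w Gw; by rewrite eZ.
move=> w hx hy; rewrite eZ; last by split.
by rewrite /phi EFinB !fineK.
Qed.

Lemma cinf_comp_spec (f : R -> R) X : extremally_disconnected K -> continuous f ->
  Cinf X -> Cinf (cinf_comp f X) /\ forall w, X w \is a fin_num ->
    cinf_comp f X w = (f (fine (X w)))%:E.
Proof.
move=> ED cf hX.
pose G := [set w | X w \is a fin_num].
pose phi w := (f (fine (X w)))%:E.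
have cphi : forall w, G w -> {for w, continuous phi}.
  move=> w hx; apply: cvg_EFin; first by apply: nearW => v.
  exact: (cvg_comp _ _ (fine_cont (proj1 hX w) hx) (cf (fine (X w)))).
have [Z [cZ eZ]] := ed_extend ED (open1 hX) (dense1 hX) cphi.
rewrite /cinf_comp /cinf_choose.
match goal with |- context [epsilon ?i ?P] => apply: (@epsilon_spec _ i P) end.
exists Z; split.
  apply: (Cinf_of cZ (open1 hX) (dense1 hX)) => w Gw; by rewrite eZ.
by move=> w hx; rewrite eZ.
Qed.


Lemma cont_piece (C : set K) (g1 g2 : K -> \bar R) : open C -> closed C ->
  continuous g1 -> continuous g2 ->
  continuous (fun w => if w \in C then g1 w else g2 w).
Proof.
move=> oC cC c1 c2 w; case: (boolP (w \in C)) => wC.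
- have e : \forall v \near w, g1 v = (if v \in C then g1 v else g2 v).
    apply: filterS (open_nbhs_nbhs (conj oC (set_mem wC))) => v Cv.
    by rewrite mem_set.
  apply: cvg_trans (near_eq_cvg e) _; rewrite /= wC; exact: c1.
- have e : \forall v \near w, g2 v = (if v \in C then g1 v else g2 v).
    have nC : (~` C) w by move=> Cw; move: wC; rewrite mem_set.
    apply: filterS (open_nbhs_nbhs (conj (closed_openC cC) nC)) => v Cv.
    by rewrite ifF //; apply/negP => /set_mem.
  apply: cvg_trans (near_eq_cvg e) _; rewrite /= (negbTE wC); exact: c2.
Qed.

End Helpers.

Theorem mainTheorem8 (R : realType) (K : topologicalType)
    (E : set (K -> \bar R)) (f : R -> R)
    (xs : nat -> K -> \bar R) (x : K -> \bar R) :
  compact [set: K] -> hausdorff_space K -> extremally_disconnected K ->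
  order_dense_ideal E -> E (fun _ => 1%E) ->
  continuous f ->
  (forall n, E (xs n)) -> E x ->
  uo_conv E xs x ->
  uo_conv (@Cinf R K) (fun n => cinf_comp f (xs n)) (cinf_comp f x).
Proof.
move=> _ _ ED hE E1 cf Exs Ex huo u Cu u0.
have ECinf := proj1 hE.
have ideal := proj1 (proj2 (proj2 (proj2 (proj2 hE)))).
have Cxn n : Cinf (xs n) by exact: ECinf.
have Cx : Cinf x by exact: ECinf.
have [CB eB] := cinf_comp_spec ED cf Cx.
have CA n := proj1 (cinf_comp_spec ED cf (Cxn n)).
have eA n := proj2 (cinf_comp_spec ED cf (Cxn n)).
have Cg n := proj1 (cinf_sub_spec ED (CA n) CB).
have eg n := proj2 (cinf_sub_spec ED (CA n) CB).
have ed n := proj2 (cinf_sub_spec ED (Cxn n) Cx).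
set g := fun n => cinf_sub (cinf_comp f (xs n)) (cinf_comp f x).
set s := fun n w => Order.min `|g n w|%E (u w).
have [D [leD [y [_ [_ [_ [_ [Ey [_ [y0 [yinf ydom]]]]]]]]]]] :=
  huo (fun _ => 1%E) E1 (fun _ => lee01).
have Cy a : Cinf (y a) by exact: ECinf.
have Ylem : forall U : set K, open U -> U !=set0 -> forall eps : R, 0 < eps -> eps <= 1 ->
    exists a, exists2 v, U v & (y a v < eps%:E)%E.
  move=> U oU [v0 Uv0] eps eps0 eps1; apply: contrapT => H.
  have H' a v : U v -> (eps%:E <= y a v)%E.
    by move=> Uv; rewrite leNgt; apply/negP => lt; apply: H; exists a, v.
  pose C := closure U.
  have oC : open C := ED U oU.
  have cC : closed C by exact: closed_closure.
  pose h := fun w => if w \in C then eps%:E else 0%E.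
  have ch : continuous h by apply: cont_piece => //; exact: cst_continuous.
  have Ch : Cinf h.
    apply: (@Cinf_of _ _ h setT ch openT).
      by move=> W _ [w Ww]; exists w.
    by move=> w _; rewrite /h; case: (w \in C).
  have Eh : E h.
    apply: (ideal _ _ Ch E1) => w; rewrite /h; case: (w \in C).
      by rewrite /abse /= lee_fin normr1 ger0_norm // ltW.
    by rewrite /abse /= lee_fin normr0 normr1.
  have hy : forall a w, (h w <= y a w)%E.
    move=> a w; rewrite /h; case: (boolP (w \in C)) => wC; last exact: y0.
    rewrite leNgt; apply/negP => lt.
    have := cont_lt (proj1 (Cy a) w) lt.
    move/(set_mem wC) => [v [Uv ltv]].
    by move: (H' a v Uv); rewrite leNgt ltv.
  have := yinf h Eh hy v0; rewrite /h mem_set; last exact: subset_closure.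
  by rewrite lee_fin leNgt eps0.
have core : forall U : set K, open U -> U !=set0 -> forall del : R, 0 < del ->
    exists m, exists V : set K, [/\ open V, V !=set0, V `<=` U &
      forall n, (m <= n)%N -> forall w, V w -> (`|g n w| <= del%:E)%E].
  move=> U oU U0 del del0.
  have [w1 [Uw1 xw1]] := dense1 Cx oU U0.
  pose t0 := fine (x w1).
  have [eta eta0 heta] : exists2 eta : R, 0 < eta &
      forall r, `|t0 - r| < eta -> `|f t0 - f r| < del / 2.
    have h := @cvgr_dist_lt _ _ _ _ (nbhs_filter t0) f (f t0) (cf t0) _ (divr_gt0 del0 (ltr0Sn _ 1)).
    have [e e0 he] := (proj1 (nbhs_ballP _ _) h).
    by exists e => // r hr; apply: he.
  pose U1 := (U `&` [set v | x v \is a fin_num /\ `|t0 - fine (x v)| < eta / 2])°.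
  have U1w1 : U1 w1.
    apply: filterI; first exact: (open_nbhs_nbhs (conj oU Uw1)).
    apply: filterI; first exact: fin_near (proj1 Cx w1) xw1.
    exact: (cvgr_dist_lt _ _ (fine_cont (proj1 Cx w1) xw1) _ (divr_gt0 eta0 (ltr0Sn _ 1))).
  have oU1 : open U1 by exact: open_interior.
  pose eps := Order.min (eta / 2) 1.
  have eps0 : 0 < eps by rewrite lt_min divr_gt0 // ltr01.
  have eps1 : eps <= 1 by rewrite ge_min lexx orbT.
  have [a [v0 U1v0 yv0]] := Ylem U1 oU1 (ex_intro _ w1 U1w1) eps eps0 eps1.
  pose V := U1 `&` [set v | (y a v < eps%:E)%E].
  have oV : open V.
    apply: openI => //; rewrite openE => v /= hv.
    exact: cont_lt (proj1 (Cy a) v) hv.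
  have [m hm] := ydom a.
  exists m, V; split => //; first by exists v0.
    by move=> v [/interior_subset [] ].
  move=> n mn w Vw; rewrite leNgt; apply/negP => lt.
  pose W := V `&` [set v | (del%:E < `|g n v|)%E].
  have oW : open W.
    apply: openI => //; rewrite openE => v /= hv.
    have cc : {for v, continuous (fun v => `|g n v|%E)}.
      exact: (cvg_comp _ _ (proj1 (Cg n) v) (@abse_continuous R _)).
    exact: (cont_gt cc hv).
  have [v [[[/interior_subset [_ [xv hxv]] yv] gv] [xnv _]]] :=
    dense2 (Cxn n) Cx oW (ex_intro _ w (conj Vw lt)).
  pose p := fine (xs n v); pose q := fine (x v).
  have dnv : cinf_sub (xs n) x v = (p - q)%:E by rewrite ed // EFinB !fineK.
  have hd := hm n mn v; rewrite dnv in hd.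
  have hpq : `|p - q| < eps.
    have : (Order.min `|(p - q)%:E| 1 < eps%:E)%E.
      exact: le_lt_trans (lee_abs _) (le_lt_trans hd yv).
    rewrite gt_min => /orP[|]; first by rewrite /abse lte_fin.
    by rewrite lte_fin ltNge eps1.
  have epseta : eps <= eta / 2 by rewrite ge_min lexx.
  have hp : `|t0 - p| < eta.
    have := ler_distD q t0 p; rewrite (distrC q p) => h; lra.
  have gvE : g n v = (f p - f q)%:E.
    have fA : cinf_comp f (xs n) v \is a fin_num by rewrite eA.
    have fB : cinf_comp f x v \is a fin_num by rewrite eB.
    by rewrite /g eg // eA // eB // EFinB.
  have h1 := heta p hp.
  have hq : `|t0 - q| < eta by lra.
  have h2 := heta q hq.
  have gv' : (del%:E < `|g n v|)%E := gv.
  move: gv'; rewrite gvE /abse lte_fin => {}gv.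
  have := ler_distD (f t0) (f p) (f q); rewrite (distrC (f p) (f t0)) => h3.
  lra.
have cs n : continuous (s n).
  apply: (@min_fun_continuous _ _ _ (fun w => `|g n w|%E) u); last exact: (proj1 Cu).
  by move=> w; exact: (cvg_comp _ _ (proj1 (Cg n) w) (@abse_continuous R _)).
have s0 n w : (0 <= s n w)%E by rewrite /s le_min abse_ge0 u0.
have su n w : (s n w <= u w)%E by rewrite /s ge_min lexx orbT.
pose Aset (p : R * nat) := [set w | forall n, (p.2 <= n)%N -> (s n w <= (p.1)%:E)%E].
pose Cset p := closure (Aset p)°.
pose piece p := fun w => if w \in Cset p then (p.1)%:E else u w.
pose z (L : seq (R * nat)) :=
  foldr (fun p acc => fun w => Order.min (piece p w) (acc w)) u L.
have CAp p : Cset p `<=` Aset p.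
  move=> w cw n hn; rewrite leNgt; apply/negP => lt.
  have [v [iv ltv]] := cw _ (cont_gt (cs n w) lt).
  by have := interior_subset iv n hn; rewrite leNgt ltv.
have oC p : open (Cset p) by exact: ED _ (@open_interior _ _).
have cC p : closed (Cset p) by exact: closed_closure.
have cpiece p : continuous (piece p).
  exact: (@cont_piece R K (Cset p) (fun=> (p.1)%:E) u (oC p) (cC p) (@cst_continuous K _ (p.1)%:E) (proj1 Cu)).
have piece0 p w : (0 <= piece p w)%E.
  rewrite /piece; case: ifPn => [wC|_]; last exact: u0.
  exact: le_trans (s0 p.2 w) (CAp p w (set_mem wC) p.2 (leqnn _)).
have pieces n p w : (p.2 <= n)%N -> (s n w <= piece p w)%E.
  move=> hn; rewrite /piece; case: ifPn => [wC|_]; last exact: su.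
  exact: CAp p w (set_mem wC) n hn.
have cz L : continuous (z L).
  elim: L => [|p L IH] /=; first exact: (proj1 Cu).
  exact: min_fun_continuous (cpiece p) IH.
have z0 L w : (0 <= z L w)%E.
  by elim: L => [|p L IH] /=; [exact: u0|rewrite le_min piece0 IH].
have zu L w : (z L w <= u w)%E.
  by elim: L => [|p L IH] /=; [exact: lexx|rewrite ge_min IH orbT].
have zp L p w : List.In p L -> (z L w <= piece p w)%E.
  elim: L => [|q L IH] //= [->|hin]; rewrite ge_min ?lexx //.
  by rewrite (IH hin) orbT.
have zmono L1 L2 : (forall p, List.In p L1 -> List.In p L2) ->
    forall w, (z L2 w <= z L1 w)%E.
  elim: L1 => [|p L1 IH] h w /=; first exact: zu.
  rewrite le_min zp /=; last by apply: h; left.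
  by rewrite IH // => q hq; apply: h; right.
have Cz L : Cinf (z L).
  split; first exact: cz.
  apply/seteqP; split => // v hv.
  have sub : [set w | z L w = +oo%E \/ z L w = -oo%E] `<=`
             [set w | u w = +oo%E \/ u w = -oo%E].
    move=> w [h|h]; last by have := z0 L w; rewrite h.
    by left; have := zu L w; rewrite h leye_eq => /eqP.
  by rewrite -(proj2 Cu); exact: (interiorS (closureS sub) hv).
pose n0 (L : seq (R * nat)) := foldr (fun p m => maxn p.2 m) 0%N L.
have zdom L n : (n0 L <= n)%N -> forall w, (s n w <= z L w)%E.
  elim: L => [|p L IH] /=; first by move=> _ w; exact: su.
  rewrite geq_max => /andP[h1 h2] w; rewrite le_min pieces //.
  exact: IH.
have zinf h : Cinf h -> (forall L w, (h w <= z L w)%E) -> forall w, (h w <= 0)%E.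
  move=> Ch hz w0; rewrite leNgt; apply/negP => h0.
  have [c /andP[c0 ch]] := ereal_between h0.
  have [del cE] : exists del : R, c = del%:E.
    move: c0 ch; case: c => [r| |] //; first by exists r.
    by move=> _; rewrite ltNge leey.
  rewrite cE lte_fin in c0; rewrite cE in ch.
  pose U := [set v | (del%:E < h v)%E].
  have oU : open U by rewrite openE => v hv; exact: cont_gt (proj1 Ch v) hv.
  have [m [V [oV [v Vv] VU hV]]] := core U oU (ex_intro _ w0 ch) del c0.
  have VA : V `<=` Aset (del, m).
    move=> w Vw n hn; apply: le_trans (hV n hn w Vw).
    by rewrite /s ge_min lexx.
  have VA' := VA; rewrite (open_subsetE _ oV) in VA'.
  have VC : Cset (del, m) v by apply: subset_closure; exact: VA'.
  have := hz [:: (del, m)] v; rewrite /= /piece mem_set //=.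
  move=> hle; have : (h v <= del%:E)%E by apply: le_trans hle _; rewrite ge_min lexx.
  by rewrite leNgt (VU v Vv).
rewrite /order_null.
exists (seq (R * nat)), (fun L1 L2 => forall p, List.In p L1 -> List.In p L2), z.
split; first exact: (inhabits [::]).
split; first by [].
split; first by move=> a b c hab hbc p /hab /hbc.
split; first by move=> a b; exists (a ++ b); split => p hp;
  apply: List.in_or_app; [left|right].
split; first exact: Cz.
split; first by move=> a b hab w; exact: zmono.
split; first exact: z0.
split; first exact: zinf.
move=> L; exists (n0 L) => n hn w.
by rewrite gee0_abs; [exact: zdom|exact: s0].
Qed.
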